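(* Let $\mathcal X$ and $\mathcal Y$ be nonempty compact $\beta$-strongly convex sets (with respect to norms $\|\cdot\|_{\mathcal X}$, $\|\cdot\|_{\mathcal Y}$), and let $\mathcal L:\mathcal X\times\mathcal Y\to\mathbb R$ be a differentiable convex-concave function such that $F(z):=(\nabla_x\mathcal L(z),-\nabla_y\mathcal L(z))$ satisfies $\max(\|\nabla_x\mathcal L(z)-\nabla_x\mathcal L(z')\|_{\mathcal X^*},\|\nabla_y\mathcal L(z)-\nabla_y\mathcal L(z')\|_{\mathcal Y^*})\le L\|z-z'\|_{\mathcal X\times\mathcal Y}$ for all $z,z'$. If $\min(\|\nabla_x\mathcal L(z)\|_{\mathcal X^*},\|\nabla_y\mathcal L(z)\|_{\mathcal Y^*})\ge\delta>0$ for all $z\in\mathcal X\times\mathcal Y$, then the oracle function $z\mapsto s(z):=\arg\min_{s\in\mathcal X\times\mathcal Y}\langle s,F(z)\rangle$ is well defined (the minimizer is unique) and is $\frac{4L}{\delta\beta}$-Lipschitz continuous with respect to the norm $\|(x,y)\|_{\mathcal X\times\mathcal Y}:=\|x\|_{\mathcal X}+\|y\|_{\mathcal Y}$.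
   Context: $\mathcal L$ is convex-concave if $\mathcal L(\cdot,y)$ is convex for every $y$ and $\mathcal L(x,\cdot)$ is concave for every $x$. $\|\cdot\|_{\mathcal X^*}$ denotes the dual norm of $\|\cdot\|_{\mathcal X}$ (similarly for $\mathcal Y$). A convex set $\mathcal X$ is $\beta$-strongly convex with respect to $\|\cdot\|$ if for any $x,y\in\mathcal X$ and $\gamma\in[0,1]$, the $\|\cdot\|$-ball of radius $\gamma(1-\gamma)\frac\beta2\|x-y\|^2$ centered at $\gamma x+(1-\gamma)y$ is contained in $\mathcal X$. *)

(* Defs.v *)
From HB Require Import structures.
From mathcomp Require Import all_boot all_order all_algebra.
From mathcomp Require Import all_classical all_reals all_analysis.
Set Implicit Arguments. Unset Strict Implicit. Unset Printing Implicit Defensive.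
Import Order.TTheory GRing.Theory Num.Theory.
Import numFieldNormedType.Exports.
Local Open Scope classical_set_scope.
Local Open Scope ring_scope.

Definition dotv (R : realType) (n : nat) (u v : 'rV[R]_n) : R :=
  \sum_(i < n) u ord0 i * v ord0 i.

Definition is_norm (R : realType) (n : nat) (N : 'rV[R]_n -> R) : Prop :=
  [/\ forall v, 0 <= N v,
      forall v, N v = 0 -> v = 0,
      forall (a : R) v, N (a *: v) = `|a| * N v
    & forall u v, N (u + v) <= N u + N v].

Definition dual_norm (R : realType) (n : nat) (N : 'rV[R]_n -> R)
  (w : 'rV[R]_n) : R :=
  sup [set dotv w v | v in [set v | N v <= 1]].

Definition convex_set (R : realType) (n : nat) (X : set 'rV[R]_n) : Prop :=
  forall x y (g : R), X x -> X y -> 0 <= g <= 1 ->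
    X (g *: x + (1 - g) *: y).

Definition strongly_convex_set (R : realType) (n : nat) (N : 'rV[R]_n -> R)
  (beta : R) (X : set 'rV[R]_n) : Prop :=
  convex_set X /\
  forall x y (g : R), X x -> X y -> 0 <= g <= 1 ->
    forall w, N (w - (g *: x + (1 - g) *: y))
                <= g * (1 - g) * (beta / 2) * N (x - y) ^+ 2 -> X w.

(* Main.v *)
Require Import Defs.
From HB Require Import structures.
From mathcomp Require Import all_boot all_order all_algebra.
From mathcomp Require Import all_classical all_reals all_analysis.
From mathcomp Require Import ring lra.
Import Order.TTheory GRing.Theory Num.Theory.
Import numFieldNormedType.Exports.
Local Open Scope classical_set_scope.
Local Open Scope ring_scope.



Section S.
Context {R : realType} {k : nat}.
Implicit Types (u v w : 'rV[R]_k).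

Lemma dotvC u v : dotv u v = dotv v u.
Proof. by apply: eq_bigr => i _; rewrite mulrC. Qed.
Lemma dotvDl u v w : dotv (u + v) w = dotv u w + dotv v w.
Proof. by rewrite /dotv -big_split; apply: eq_bigr => i _; rewrite mxE mulrDl. Qed.
Lemma dotvZl a u w : dotv (a *: u) w = a * dotv u w.
Proof. by rewrite /dotv mulr_sumr; apply: eq_bigr => i _; rewrite mxE mulrA. Qed.
Lemma dotvNl u w : dotv (- u) w = - dotv u w.
Proof. by rewrite -scaleN1r dotvZl mulN1r. Qed.
Lemma dotvBl u v w : dotv (u - v) w = dotv u w - dotv v w.
Proof. by rewrite dotvDl dotvNl. Qed.
Lemma dotv0l w : dotv 0 w = 0.
Proof. by rewrite /dotv big1 // => i _; rewrite mxE mul0r. Qed.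
Lemma dotvDr u v w : dotv w (u + v) = dotv w u + dotv w v.
Proof. by rewrite dotvC dotvDl !(dotvC w). Qed.
Lemma dotvZr a u w : dotv w (a *: u) = a * dotv w u.
Proof. by rewrite dotvC dotvZl dotvC. Qed.
Lemma dotvNr u w : dotv w (- u) = - dotv w u.
Proof. by rewrite dotvC dotvNl dotvC. Qed.
Lemma dotvBr u v w : dotv w (u - v) = dotv w u - dotv w v.
Proof. by rewrite dotvC dotvBl !(dotvC w). Qed.
Lemma dotv0r w : dotv w 0 = 0.
Proof. by rewrite dotvC dotv0l. Qed.

Lemma coord_le u i : `|u ord0 i| <= `|u|.
Proof.
have /mapP[j Hj ->] : `|u ord0 i| \in [seq `|u x.1 x.2| | x : 'I_1 * 'I_k].
  by apply/mapP; exists (ord0, i) => //=; rewrite mem_enum.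
by rewrite [leRHS]/Num.norm /= mx_normrE; apply/bigmax_geP; right => /=; exists j.
Qed.

Lemma dotv_le u w : `|dotv u w| <= `|u| * \sum_i `|w ord0 i|.
Proof.
rewrite /dotv mulr_sumr; apply: le_trans (ler_norm_sum _ _ _) _.
apply: ler_sum => i _; rewrite normrM ler_wpM2r //; exact: coord_le.
Qed.

Lemma lip_cont (f : 'rV[R]_k -> R) (K : R) : 0 < K ->
  (forall u v, `|f u - f v| <= K * `|u - v|) -> continuous f.
Proof.
move=> K0 Hf x; apply/(@cvgrPdist_lt _ _ _ _ (@nbhs_filter _ x)) => e e0.
have : \forall y \near x, `|x - y| < e / K.
  apply: (@cvgr_dist_lt _ _ _ (nbhs x) _ id x cvg_id); last by rewrite divr_gt0.
apply: filterS => y Hy.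
apply: le_lt_trans (Hf x y) _.
by rewrite -ltr_pdivlMl // mulrC.
Qed.

End S.



Section N.
Context {R : realType} {k : nat} {N : 'rV[R]_k -> R}.
Hypothesis hN : is_norm N.

Lemma N_ge0 v : 0 <= N v. Proof. by case: hN. Qed.
Lemma N_eq0 v : N v = 0 -> v = 0. Proof. by case: hN => _ H _ _; exact: H. Qed.
Lemma NZ a v : N (a *: v) = `|a| * N v. Proof. by case: hN. Qed.
Lemma ND u v : N (u + v) <= N u + N v. Proof. by case: hN. Qed.
Lemma N0 : N 0 = 0.
Proof. by rewrite -(scale0r (0 : 'rV[R]_k)) NZ normr0 mul0r. Qed.
Lemma NN v : N (- v) = N v.
Proof. by rewrite -scaleN1r NZ normrN normr1 mul1r. Qed.
Lemma NB u v : N (u - v) = N (v - u).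
Proof. by rewrite -NN opprB. Qed.

Lemma N_sum (I : finType) (F : I -> 'rV[R]_k) :
  N (\sum_i F i) <= \sum_i N (F i).
Proof.
elim/big_rec2: _ => [|i y1 y2 _ H]; first by rewrite N0.
by apply: le_trans (ND _ _) _; rewrite lerD2l.
Qed.

Definition KN := \sum_(i < k) N (delta_mx ord0 i) + 1.
Lemma KN_gt0 : 0 < KN.
Proof. by rewrite /KN ltr_wpDl // sumr_ge0 // => i _; exact: N_ge0. Qed.

Lemma N_up v : N v <= KN * `|v|.
Proof.
rewrite {1}(row_sum_delta v); apply: le_trans (N_sum _ _) _.
rewrite /KN mulrDl mul1r mulr_suml.
apply: (@le_trans _ _ (\sum_(i < k) N (delta_mx ord0 i) * `|v|)); last first.
  by rewrite lerDl.
apply: ler_sum => i _; rewrite NZ mulrC ler_wpM2l ?N_ge0 //; exact: coord_le.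
Qed.

Lemma N_lip u v : `|N u - N v| <= KN * `|u - v|.
Proof.
apply: (@le_trans _ _ (N (u - v))); last exact: N_up.
have h1 := ND u (v - u); have h2 := ND v (u - v).
rewrite addrC subrK in h1; rewrite addrC subrK in h2.
rewrite (NB v u) in h1.
rewrite ler_norml; apply/andP; split; lra.
Qed.

Lemma N_cont : continuous N.
Proof. apply: (@lip_cont R k N KN KN_gt0). exact: N_lip. Qed.

Lemma N_equiv : exists2 C, 0 < C & forall v, `|v| <= C * N v.
Proof.
have [[v0 v0n0]|] := pselect (exists v : 'rV[R]_k, v != 0); last first.
  move=> H; exists 1 => // v; have -> : v = 0.
    by apply: contra_notP H => /eqP H; exists v.
  by rewrite normr0 mul1r N0.
pose S := [set v : 'rV[R]_k | `|v| = 1].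
have S0 : S !=set0.
  exists (`|v0|^-1 *: v0); rewrite /S /= normrZ normfV normr_id mulVf //.
  by rewrite normr_eq0.
have cS : compact S.
  apply: bounded_closed_compact.
    exists 1; split; first by rewrite num_real.
    by move=> x x1 v; rewrite /S /= => ->; exact: ltW.
  rewrite (_ : S = Num.norm @^-1` [set 1]) //.
  apply: preimage_closed; last exact: closed_eq.
  by move=> x _; exact: norm_continuous.
have [c cinS cmin] := compact_EVT_min S0 cS (continuous_subspaceT N_cont).
have Nc : 0 < N c.
  rewrite lt_neqAle N_ge0 andbT; apply/eqP => /esym /N_eq0 c0.
  by move: cinS; rewrite inE /S /= c0 normr0 => /eqP; rewrite eq_sym oner_eq0.
exists (N c)^-1; first by rewrite invr_gt0.
move=> v; have [->|vn0] := eqVneq v 0; first by rewrite normr0 N0 mulr0.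
have nv : 0 < `|v| by rewrite normr_gt0.
have := cmin (`|v|^-1 *: v).
rewrite !inE /S /= normrZ normfV normr_id mulVf ?gt_eqF // => /(_ erefl).
rewrite NZ normfV normr_id => H.
by rewrite mulrC ler_pdivlMr // -ler_pdivlMl.
Qed.

End N.



Section D.
Context {R : realType} {k : nat} {N : 'rV[R]_k -> R}.
Hypothesis hN : is_norm N.

Definition DS w := [set dotv w v | v in [set v | N v <= 1]].

Lemma dual_has_sup w : has_sup (DS w).
Proof.
split; first by exists 0; exists 0; rewrite /= ?(N0 hN) ?dotv0r ?ler01.
have [C C0 HC] := N_equiv hN.
exists (C * \sum_i `|w ord0 i|) => _ [v /= Nv <-].
apply: le_trans (ler_norm _) _; rewrite dotvC.
apply: le_trans (dotv_le _ _) _; rewrite mulrC [leRHS]mulrC ler_wpM2l //.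
  by rewrite sumr_ge0.
apply: le_trans (HC v) _; rewrite -[leRHS]mulr1 ler_wpM2l //; exact: ltW.
Qed.

Lemma dual_ge w v : dotv w v <= dual_norm N w * N v.
Proof.
have [->|vn0] := eqVneq v 0; first by rewrite dotv0r (N0 hN) mulr0.
have Nv : 0 < N v.
  by rewrite lt_neqAle N_ge0 // andbT; apply/eqP => /esym /(N_eq0 hN) /eqP; rewrite (negbTE vn0).
have := sup_upper_bound (dual_has_sup w) (_ : DS w (dotv w ((N v)^-1 *: v))).
rewrite dotvZr -ler_pdivrMr // mulrC => ->; first by [].
exists ((N v)^-1 *: v) => //=.
by rewrite (NZ hN) normfV ger0_norm ?N_ge0 // mulVf // gt_eqF.
by rewrite dotvZr mulrC.
Qed.

Lemma dual_approx w eps : 0 < eps ->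
  exists v, N v <= 1 /\ dual_norm N w - eps < dotv w v.
Proof.
move=> e0; have [_ [v Nv <-] H] := sup_adherent e0 (dual_has_sup w).
by exists v.
Qed.

Lemma dual_ge0 w : 0 <= dual_norm N w.
Proof.
apply: (sup_upper_bound (dual_has_sup w)); exists 0; rewrite /= ?(N0 hN) ?dotv0r ?ler01 //.
Qed.

Lemma dual_opp w : dual_norm N (- w) = dual_norm N w.
Proof.
rewrite /dual_norm; congr sup; apply/seteqP; split => _ [v /= Nv <-].
  by exists (- v); rewrite /= ?(NN hN) // dotvNr dotvC dotvNl dotvC.
by exists (- v); rewrite /= ?(NN hN) // dotvNr dotvNl opprK.
Qed.

Lemma dual0 : dual_norm N 0 = 0.
Proof.
rewrite /dual_norm (_ : [set _ | v in _] = [set 0]) ?sup1 //.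
apply/seteqP; split => [_ [v _ <-]|_ ->] /=; first by rewrite dotv0l.
by exists 0; rewrite /= ?(N0 hN) ?dotv0l ?ler01.
Qed.

End D.



Section K.
Context {R : realType} {k : nat} {N : 'rV[R]_k -> R}.
Hypothesis hN : is_norm N.

Lemma sc_key (beta : R) (Xs : set 'rV[R]_k) g s x :
  0 < beta -> strongly_convex_set N beta Xs -> Xs s -> Xs x ->
  (forall y, Xs y -> dotv s g <= dotv y g) ->
  beta / 4 * dual_norm N g * N (x - s) ^+ 2 <= dotv x g - dotv s g.
Proof.
move=> b0 [_ SC] Xss Xsx smin.
set r := beta / 8 * N (x - s) ^+ 2.
have r0 : 0 <= r by rewrite /r mulr_ge0 ?exprn_ge0 ?N_ge0 // divr_ge0 // ltW.
set m := 2^-1 *: x + (1 - 2^-1) *: s.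
have h2 : 0 <= (2^-1 : R) <= 1.
  by apply/andP; split; [rewrite invr_ge0 ler0n | rewrite invf_le1 ?ler1n ?ltr0n].
have key : forall v, N v <= 1 -> dotv s g <= dotv m g - r * dotv g v.
  move=> v Nv.
  have -> : dotv m g - r * dotv g v = dotv (m - r *: v) g.
    by rewrite dotvBl dotvZl (dotvC g v).
  apply: smin; apply: (SC x s 2^-1) => //.
  rewrite addrAC subrr add0r (NN hN) (NZ hN) ger0_norm //.
  have -> : 2^-1 * (1 - 2^-1) * (beta / 2) * N (x - s) ^+ 2 = r.
    by rewrite /r; field.
  exact: ler_piMr.
have Em : dotv m g = 2^-1 * dotv x g + (1 - 2^-1) * dotv s g.
  by rewrite /m dotvDl !dotvZl.
have Hsx := smin x Xsx.
have [r00|rpos] := eqVneq r 0.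
  have -> : beta / 4 * dual_norm N g * N (x - s) ^+ 2 = 2 * r * dual_norm N g.
    by rewrite /r; field.
  by rewrite r00 mulr0 mul0r subr_ge0.
have rp : 0 < r by rewrite lt_neqAle eq_sym rpos.
have -> : beta / 4 * dual_norm N g * N (x - s) ^+ 2 = 2 * (r * dual_norm N g).
  by rewrite /r; field.
apply/ler_addgt0Pr => e e0.
have e2 : 0 < e / (2 * r) by rewrite divr_gt0 // mulr_gt0.
have [v [Nv Hv]] := dual_approx hN g _ e2.
have K := key v Nv.
have H1 : r * (dual_norm N g - e / (2 * r)) <= r * dotv g v.
  by rewrite ler_wpM2l // ltW.
have H2 : r * (dual_norm N g - e / (2 * r)) = r * dual_norm N g - e / 2.
  by field; rewrite gt_eqF.
rewrite H2 in H1; rewrite Em in K.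
lra.
Qed.

Lemma lip_part (beta delta : R) (Xs : set 'rV[R]_k) g g' s s' :
  0 < beta -> 0 < delta -> strongly_convex_set N beta Xs -> Xs s -> Xs s' ->
  (forall y, Xs y -> dotv s g <= dotv y g) ->
  (forall y, Xs y -> dotv s' g' <= dotv y g') ->
  delta <= dual_norm N g -> delta <= dual_norm N g' ->
  N (s - s') <= 2 * dual_norm N (g - g') / (beta * delta).
Proof.
move=> b0 d0 SC Xs1 Xs2 m1 m2 D1 D2.
have A := sc_key _ _ _ _ _ b0 SC Xs1 Xs2 m1.
have B := sc_key _ _ _ _ _ b0 SC Xs2 Xs1 m2.
have C := dual_ge hN (g - g') (s' - s).
have E : dotv (g - g') (s' - s) = dotv s' g - dotv s g - dotv s' g' + dotv s g'.
  rewrite dotvBl !dotvBr (dotvC g s') (dotvC g s) (dotvC g' s') (dotvC g' s).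
  ring.
rewrite E (NB hN) in C; rewrite (NB hN) in A.
set d := N (s - s') in A B C *.
have dge0 : 0 <= d by exact: N_ge0.
have Dge0 := dual_ge0 hN (g - g').
have M1 : beta / 4 * delta * d ^+ 2 <= beta / 4 * dual_norm N g * d ^+ 2.
  by rewrite ler_wpM2r ?exprn_ge0 // ler_wpM2l // divr_ge0 // ltW.
have M2 : beta / 4 * delta * d ^+ 2 <= beta / 4 * dual_norm N g' * d ^+ 2.
  by rewrite ler_wpM2r ?exprn_ge0 // ler_wpM2l // divr_ge0 // ltW.
have H : beta / 2 * delta * d ^+ 2 <= dual_norm N (g - g') * d.
  have -> : beta / 2 * delta * d ^+ 2 = 2 * (beta / 4 * delta * d ^+ 2).
    by field.
  lra.
rewrite ler_pdivlMr ?mulr_gt0 //.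
have [->|dn0] := eqVneq d 0; first by rewrite mul0r mulr_ge0.
have dp : 0 < d by rewrite lt_neqAle eq_sym dn0.
have bd : 0 < beta * delta by rewrite mulr_gt0.
nra.
Qed.

End K.



Lemma dot_cont {R : realType} {k : nat} (g : 'rV[R]_k) :
  continuous (fun x : 'rV[R]_k => dotv x g).
Proof.
have K0 : 0 < \sum_i `|g ord0 i| + 1 by rewrite ltr_wpDl // sumr_ge0.
apply: (@lip_cont R k (fun x => dotv x g) _ K0) => u v.
rewrite -dotvBl; apply: le_trans (dotv_le _ _) _.
by rewrite mulrC ler_wpM2r // lerDl.
Qed.

Lemma min_exists {R : realType} {k : nat} (Xs : set 'rV[R]_k) g :
  Xs !=set0 -> compact Xs -> exists s, Xs s /\ forall y, Xs y -> dotv s g <= dotv y g.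
Proof.
move=> X0 cX.
have [c cX' cmin] := compact_EVT_min X0 cX (continuous_subspaceT (dot_cont g)).
exists c; split; first by rewrite inE in cX'.
by move=> y Xy; apply: cmin; rewrite inE.
Qed.

Theorem theorem3 (R : realType) (n m : nat)
  (NX : 'rV[R]_n -> R) (NY : 'rV[R]_m -> R)
  (X : set 'rV[R]_n) (Y : set 'rV[R]_m) (beta Lc delta : R)
  (Lf : 'rV[R]_n * 'rV[R]_m -> R)
  (gx : 'rV[R]_n * 'rV[R]_m -> 'rV[R]_n) (gy : 'rV[R]_n * 'rV[R]_m -> 'rV[R]_m) :
  is_norm NX -> is_norm NY ->
  0 < beta ->
  X !=set0 -> Y !=set0 -> compact X -> compact Y ->
  strongly_convex_set NX beta X -> strongly_convex_set NY beta Y ->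
  (* differentiability, with gradients gx (in x) and gy (in y) *)
  (forall z, X z.1 -> Y z.2 ->
     differentiable Lf z /\
     forall u v, 'd Lf z (u, v) = dotv (gx z) u + dotv (gy z) v) ->
  (* convex-concave on X x Y *)
  (forall y, Y y -> forall a b (t : R), X a -> X b -> 0 <= t <= 1 ->
     Lf (t *: a + (1 - t) *: b, y) <= t * Lf (a, y) + (1 - t) * Lf (b, y)) ->
  (forall x, X x -> forall a b (t : R), Y a -> Y b -> 0 <= t <= 1 ->
     t * Lf (x, a) + (1 - t) * Lf (x, b) <= Lf (x, t *: a + (1 - t) *: b)) ->
  (* Lipschitz gradients *)
  (forall z z', X z.1 -> Y z.2 -> X z'.1 -> Y z'.2 ->
     Num.max (dual_norm NX (gx z - gx z')) (dual_norm NY (gy z - gy z'))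
       <= Lc * (NX (z.1 - z'.1) + NY (z.2 - z'.2))) ->
  0 < delta ->
  (forall z, X z.1 -> Y z.2 ->
     delta <= Num.min (dual_norm NX (gx z)) (dual_norm NY (gy z))) ->
  let obj z (s : 'rV[R]_n * 'rV[R]_m) := dotv s.1 (gx z) + dotv s.2 (- gy z) in
  let is_min z s := X s.1 /\ Y s.2 /\
        forall s', X s'.1 -> Y s'.2 -> obj z s <= obj z s' in
  (forall z, X z.1 -> Y z.2 ->
     exists s, is_min z s /\ forall s', is_min z s' -> s' = s) /\
  (forall z z' s s', X z.1 -> Y z.2 -> X z'.1 -> Y z'.2 ->
     is_min z s -> is_min z' s' ->
     NX (s.1 - s'.1) + NY (s.2 - s'.2)
       <= (4 * Lc) / (delta * beta) * (NX (z.1 - z'.1) + NY (z.2 - z'.2))).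
Proof.
move=> hNX hNY b0 X0 Y0 cX cY SCX SCY _ _ _ Lip d0 Hd obj is_min.
have minX : forall z s, is_min z s -> forall x, X x -> dotv s.1 (gx z) <= dotv x (gx z).
  move=> z s [Xs [Ys H]] x Xx; have := H (x, s.2) Xx Ys.
  by rewrite /obj /= lerD2r.
have minY : forall z s, is_min z s -> forall y, Y y -> dotv s.2 (- gy z) <= dotv y (- gy z).
  move=> z s [Xs [Ys H]] y Yy; have := H (s.1, y) Xs Yy.
  by rewrite /obj /= lerD2l.
have dX : forall z, X z.1 -> Y z.2 -> delta <= dual_norm NX (gx z).
  by move=> z h1 h2; have := Hd z h1 h2; rewrite le_min => /andP[].
have dY : forall z, X z.1 -> Y z.2 -> delta <= dual_norm NY (- gy z).
  by move=> z h1 h2; have := Hd z h1 h2; rewrite le_min (dual_opp hNY) => /andP[].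
have lipX : forall z z' s s', X z.1 -> Y z.2 -> X z'.1 -> Y z'.2 ->
    is_min z s -> is_min z' s' ->
    NX (s.1 - s'.1) <= 2 * dual_norm NX (gx z - gx z') / (beta * delta).
  move=> z z' s s' h1 h2 h3 h4 ms ms'.
  apply: (lip_part hNX _ _ _ _ _ _ _ b0 d0 SCX) => //.
  - by case: ms.
  - by case: ms'.
  - exact: minX ms.
  - exact: minX ms'.
  - exact: dX.
  - exact: dX.
have lipY : forall z z' s s', X z.1 -> Y z.2 -> X z'.1 -> Y z'.2 ->
    is_min z s -> is_min z' s' ->
    NY (s.2 - s'.2) <= 2 * dual_norm NY (gy z - gy z') / (beta * delta).
  move=> z z' s s' h1 h2 h3 h4 ms ms'.
  have -> : gy z - gy z' = - (- gy z - - gy z').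
    by rewrite opprB opprK addrC.
  rewrite (dual_opp hNY).
  apply: (lip_part hNY _ _ _ _ _ _ _ b0 d0 SCY) => //.
  - by case: ms => _ [].
  - by case: ms' => _ [].
  - exact: minY ms.
  - exact: minY ms'.
  - exact: dY.
  - exact: dY.
split.
  move=> z h1 h2.
  have [s1 [Xs1 m1]] := min_exists _ (gx z) X0 cX.
  have [s2 [Ys2 m2]] := min_exists _ (- gy z) Y0 cY.
  have ms : is_min z (s1, s2).
    split => //; split => // s' Xs' Ys'; rewrite /obj /=.
    by apply: lerD; [exact: m1 | exact: m2].
  exists (s1, s2); split => // -[a b] mab.
  have ma := mab; case: ma => /= Xa [Yb _].
  have E1 := lipX z z (a, b) (s1, s2) h1 h2 h1 h2 mab ms.
  have E2 := lipY z z (a, b) (s1, s2) h1 h2 h1 h2 mab ms.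
  rewrite subrr (dual0 hNX) mulr0 mul0r /= in E1.
  rewrite subrr (dual0 hNY) mulr0 mul0r /= in E2.
  have /(N_eq0 hNX)/eqP : NX (a - s1) = 0 by apply/le_anti; rewrite E1 N_ge0.
  have /(N_eq0 hNY)/eqP : NY (b - s2) = 0 by apply/le_anti; rewrite E2 N_ge0.
  by rewrite !subr_eq0 => /eqP -> /eqP ->.
move=> z z' s s' h1 h2 h3 h4 ms ms'.
have E1 := lipX z z' s s' h1 h2 h3 h4 ms ms'.
have E2 := lipY z z' s s' h1 h2 h3 h4 ms ms'.
have := Lip z z' h1 h2 h3 h4; rewrite ge_max => /andP[L1 L2].
set Z := NX (z.1 - z'.1) + NY (z.2 - z'.2) in L1 L2 *.
have bd : 0 < beta * delta by rewrite mulr_gt0.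
have F1 : 2 * dual_norm NX (gx z - gx z') / (beta * delta) <= 2 * (Lc * Z) / (beta * delta).
  by rewrite ler_wpM2r ?invr_ge0 ?(ltW bd) // ler_wpM2l.
have F2 : 2 * dual_norm NY (gy z - gy z') / (beta * delta) <= 2 * (Lc * Z) / (beta * delta).
  by rewrite ler_wpM2r ?invr_ge0 ?(ltW bd) // ler_wpM2l.
have -> : 4 * Lc / (delta * beta) * Z = 2 * (Lc * Z) / (beta * delta) + 2 * (Lc * Z) / (beta * delta).
  by field; rewrite ?gt_eqF // ?mulr_gt0 // ?(mulrC delta).
lra.
Qed.
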